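(* Let $(X,d,\preceq)$ be an ordered metric space such that $(X,d)$ is complete, and let $f,g:X\to X$. Suppose: (i) $f(X)\subseteq g(X)$; (ii) $f$ is $g$-comparable; (iii) the pair $(f,g)$ is commuting (i.e. $g(f(x))=f(g(x))$ for all $x\in X$), or alternatively weakly commuting (i.e. $d(gfx,fgx)\le d(gx,fx)$ for all $x\in X$); (iv) $g$ is continuous; (v) either $f$ is continuous or $(X,d,\preceq)$ has the $g$-TCC property; (vi) there exists $x_0\in X$ with $g(x_0)\prec\succ f(x_0)$; (vii) there exists $\alpha\in[0,1)$ with $d(fx,fy)\le\alpha\, d(gx,gy)$ for all $x,y\in X$ with $g(x)\prec\succ g(y)$. Then $f$ and $g$ have a coincidence point.
   Context: An ordered metric space $(X,d,\preceq)$ is a nonempty set $X$ with a metric $d$ and a partial order $\preceq$. For $x,y\in X$, write $x\prec\succ y$ if $x\preceq y$ or $y\preceq x$. For self-maps $f,g$ of $X$: $f$ is $g$-comparable if for all $x,y\in X$, $g(x)\prec\succ g(y)$ implies $f(x)\prec\succ f(y)$. A sequence $\{x_n\}$ is termwise monotone if $x_n\prec\succ x_{n+1}$ for all $n\ge0$. $(X,d,\preceq)$ has the $g$-TCC property if for every termwise monotone sequence $\{x_n\}$ in $X$ converging to some $x\in X$ there is a subsequence $\{x_{n_k}\}$ with $g(x_{n_k})\prec\succ g(x)$ for all $k$. A coincidence point of $f,g$ is $x\in X$ with $g(x)=f(x)$. *)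

(* Defs.v *)
From Stdlib Require Import Reals.
Open Scope R_scope.

Definition is_metric {X : Type} (d : X -> X -> R) : Prop :=
  (forall x y, 0 <= d x y) /\
  (forall x y, d x y = 0 <-> x = y) /\
  (forall x y, d x y = d y x) /\
  (forall x y z, d x z <= d x y + d y z).

Definition is_partial_order {X : Type} (le : X -> X -> Prop) : Prop :=
  (forall x, le x x) /\
  (forall x y, le x y -> le y x -> x = y) /\
  (forall x y z, le x y -> le y z -> le x z).

Definition comparable {X : Type} (le : X -> X -> Prop) (x y : X) : Prop :=
  le x y \/ le y x.

Definition converges_to {X : Type} (d : X -> X -> R) (u : nat -> X) (x : X) : Prop :=
  forall eps, 0 < eps -> exists N, forall n, (n >= N)%nat -> d (u n) x < eps.

Definition cauchy {X : Type} (d : X -> X -> R) (u : nat -> X) : Prop :=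
  forall eps, 0 < eps -> exists N, forall m n, (m >= N)%nat -> (n >= N)%nat ->
    d (u m) (u n) < eps.

Definition complete {X : Type} (d : X -> X -> R) : Prop :=
  forall u : nat -> X, cauchy d u -> exists x, converges_to d u x.

Definition continuous_map {X : Type} (d : X -> X -> R) (f : X -> X) : Prop :=
  forall x eps, 0 < eps -> exists delta, 0 < delta /\
    forall y, d x y < delta -> d (f x) (f y) < eps.

Definition g_comparable {X : Type} (le : X -> X -> Prop) (f g : X -> X) : Prop :=
  forall x y, comparable le (g x) (g y) -> comparable le (f x) (f y).

Definition termwise_monotone {X : Type} (le : X -> X -> Prop) (u : nat -> X) : Prop :=
  forall n, comparable le (u n) (u (S n)).

Definition g_TCC {X : Type} (d : X -> X -> R) (le : X -> X -> Prop) (g : X -> X) : Prop :=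
  forall (u : nat -> X) (x : X), termwise_monotone le u -> converges_to d u x ->
    exists phi : nat -> nat, (forall k, (phi k < phi (S k))%nat) /\
      forall k, comparable le (g (u (phi k))) (g x).

Definition commuting {X : Type} (f g : X -> X) : Prop :=
  forall x, g (f x) = f (g x).

Definition weakly_commuting {X : Type} (d : X -> X -> R) (f g : X -> X) : Prop :=
  forall x, d (g (f x)) (f (g x)) <= d (g x) (f x).

(* Main.v *)
Require Import Defs.
From Stdlib Require Import Reals Lra Lia ClassicalEpsilon.
Open Scope R_scope.

Section Aux.
Lemma m_sym {X : Type} (d : X -> X -> R) (Hd : is_metric d) x y : d x y = d y x.
Proof. destruct Hd as (_ & _ & H & _); apply H. Qed.
Lemma m_tri {X : Type} (d : X -> X -> R) (Hd : is_metric d) x y z : d x z <= d x y + d y z.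
Proof. destruct Hd as (_ & _ & _ & H); apply H. Qed.
Lemma m_pos {X : Type} (d : X -> X -> R) (Hd : is_metric d) x y : 0 <= d x y.
Proof. destruct Hd as (H & _); apply H. Qed.
Lemma m_refl {X : Type} (d : X -> X -> R) (Hd : is_metric d) x : d x x = 0.
Proof. destruct Hd as (_ & H & _); apply H; reflexivity. Qed.

Lemma conv_uniq {X : Type} (d : X -> X -> R) (Hd : is_metric d) u p q :
  converges_to d u p -> converges_to d u q -> p = q.
Proof.
  intros Hp Hq. destruct Hd as (Hpos & Hz & Hs & Ht).
  apply Hz. destruct (Rle_lt_dec (d p q) 0) as [H|H]. { specialize (Hpos p q); lra. }
  exfalso. destruct (Hp (d p q / 2)) as [N1 H1]; [lra|].
  destruct (Hq (d p q / 2)) as [N2 H2]; [lra|].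
  specialize (H1 (N1 + N2)%nat ltac:(lia)). specialize (H2 (N1 + N2)%nat ltac:(lia)).
  pose proof (Ht p (u (N1+N2)%nat) q). rewrite (Hs p (u (N1+N2)%nat)) in H0. lra.
Qed.

Lemma conv_subseq {X : Type} (d : X -> X -> R) u p (phi : nat -> nat) :
  (forall k, (phi k < phi (S k))%nat) -> converges_to d u p ->
  converges_to d (fun k => u (phi k)) p.
Proof.
  intros Hphi Hu eps He. destruct (Hu eps He) as [N HN]. exists N.
  intros n Hn. apply HN.
  assert (forall k, (k <= phi k)%nat).
  { induction k; [lia|]. specialize (Hphi k). lia. }
  specialize (H n). lia.
Qed.

Lemma conv_cont {X : Type} (d : X -> X -> R) (Hd : is_metric d) h u p :
  continuous_map d h -> converges_to d u p -> converges_to d (fun n => h (u n)) (h p).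
Proof.
  intros Hh Hu eps He. destruct (Hh p eps He) as [del [Hdel H]].
  destruct (Hu del Hdel) as [N HN]. exists N. intros n Hn.
  rewrite (m_sym d Hd). apply H. rewrite (m_sym d Hd). apply HN; auto.
Qed.

Lemma conv_shift {X : Type} (d : X -> X -> R) u p :
  converges_to d u p -> converges_to d (fun n => u (S n)) p.
Proof.
  intros Hu eps He. destruct (Hu eps He) as [N HN]. exists N. intros n Hn. apply HN; lia.
Qed.

Lemma conv_close {X : Type} (d : X -> X -> R) (Hd : is_metric d) u v p :
  converges_to d u p ->
  (forall eps, 0 < eps -> exists N, forall n, (n >= N)%nat -> d (v n) (u n) < eps) ->
  converges_to d v p.
Proof.
  intros Hu Hv eps He. destruct (Hu (eps/2)) as [N1 H1]; [lra|].
  destruct (Hv (eps/2)) as [N2 H2]; [lra|]. exists (N1 + N2)%nat. intros n Hn.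
  specialize (H1 n ltac:(lia)). specialize (H2 n ltac:(lia)).
  pose proof (m_tri d Hd (v n) (u n) p). lra.
Qed.

Lemma conv_dom {X : Type} (d : X -> X -> R) u v p q :
  converges_to d u p -> (forall n, d (v n) q <= d (u n) p) -> converges_to d v q.
Proof.
  intros Hu Hle eps He. destruct (Hu eps He) as [N HN]. exists N. intros n Hn.
  specialize (HN n Hn). specialize (Hle n). lra.
Qed.
End Aux.

Theorem corollary3p4 (X : Type) (d : X -> X -> R) (le : X -> X -> Prop)
  (f g : X -> X)
  (Hd : is_metric d) (Hle : is_partial_order le) (Hinh : inhabited X)
  (Hcomplete : complete d)
  (Hi : forall x, exists y, f x = g y)
  (Hii : g_comparable le f g)
  (Hiii : commuting f g \/ weakly_commuting d f g)
  (Hiv : continuous_map d g)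
  (Hv : continuous_map d f \/ g_TCC d le g)
  (Hvi : exists x0, comparable le (g x0) (f x0))
  (Hvii : exists alpha, 0 <= alpha < 1 /\
     forall x y, comparable le (g x) (g y) -> d (f x) (f y) <= alpha * d (g x) (g y)) :
  exists x, g x = f x.
Proof.
  destruct Hvi as [x0 Hx0]. destruct Hvii as [a [[Ha0 Ha1] Hc]].
  assert (Hwc : weakly_commuting d f g).
  { destruct Hiii as [H|H]; auto. intro x. rewrite H, (m_refl d Hd). apply (m_pos d Hd). }
  set (h := fun x => proj1_sig (constructive_indefinite_description _ (Hi x))).
  assert (Hh : forall x, f x = g (h x)).
  { intro x. unfold h. destruct (constructive_indefinite_description _ (Hi x)); auto. }
  set (xs := fun n => Nat.iter n h x0).
  set (y := fun n => g (xs n)).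
  assert (HyS : forall n, y (S n) = f (xs n)).
  { intro n. unfold y. rewrite Hh. reflexivity. }
  assert (Hcomp : forall n, comparable le (y n) (y (S n))).
  { induction n.
    - rewrite HyS. exact Hx0.
    - rewrite !HyS. apply Hii. exact IHn. }
  set (D := d (y 0%nat) (y 1%nat)).
  assert (HD : 0 <= D) by apply (m_pos d Hd).
  assert (Hstep : forall n, d (y n) (y (S n)) <= a ^ n * D).
  { induction n.
    - rewrite pow_O, Rmult_1_l. apply Rle_refl.
    - rewrite (HyS n), (HyS (S n)).
      eapply Rle_trans. apply Hc. exact (Hcomp n).
      change (a * d (y n) (y (S n)) <= a * a ^ n * D).
      rewrite Rmult_assoc. apply Rmult_le_compat_l; auto. }
  assert (Hsum : forall m k, (1 - a) * d (y m) (y (m + k)%nat) <= a ^ m * D * (1 - a ^ k)).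
  { intros m k. induction k.
    - rewrite Nat.add_0_r, (m_refl d Hd). simpl. lra.
    - rewrite Nat.add_succ_r.
      pose proof (m_tri d Hd (y m) (y (m + k)%nat) (y (S (m + k)))) as T.
      pose proof (Hstep (m + k)%nat) as S1. rewrite pow_add in S1.
      assert (T2 : d (y m) (y (S (m + k))) <= d (y m) (y (m + k)%nat) + a ^ m * a ^ k * D) by lra.
      apply (Rmult_le_compat_l (1 - a)) in T2; [|lra].
      simpl. lra. }
  assert (Hcauchy : cauchy d y).
  { intros eps He.
    destruct (pow_lt_1_zero a ltac:(rewrite Rabs_pos_eq; lra) (eps * (1 - a) / (D + 1)))
      as [N HN].
    { apply Rdiv_lt_0_compat; [apply Rmult_lt_0_compat|]; lra. }
    exists N.
    assert (K : forall m n, (m >= N)%nat -> (m <= n)%nat -> d (y m) (y n) < eps).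
    { intros m n Hm Hmn. replace n with (m + (n - m))%nat by lia.
      specialize (Hsum m (n - m)%nat). specialize (HN m Hm).
      rewrite Rabs_pos_eq in HN by (apply pow_le; lra).
      pose proof (pow_le a (n - m) Ha0). pose proof (pow_le a m Ha0).
      assert (a ^ m * (D + 1) < eps * (1 - a)).
      { apply (Rmult_lt_compat_r (D + 1)) in HN; [|lra].
        unfold Rdiv in HN. rewrite Rmult_assoc, Rinv_l in HN by lra. lra. }
      assert (a ^ m * D * (1 - a ^ (n - m)) <= a ^ m * D).
      { assert (0 <= a ^ m * D) by (apply Rmult_le_pos; lra).
        assert (0 <= a ^ m * D * a ^ (n - m)) by (apply Rmult_le_pos; lra). lra. }
      destruct (Rlt_le_dec (d (y m) (y (m + (n - m))%nat)) eps) as [L|L]; auto.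
      apply (Rmult_le_compat_l (1 - a)) in L; lra. }
    intros m n Hm Hn. destruct (Nat.le_gt_cases m n).
    - apply K; auto.
    - rewrite (m_sym d Hd). apply K; auto; lia. }
  destruct (Hcomplete y Hcauchy) as [z Hz].
  assert (Hfy : converges_to d (fun n => f (y n)) (g z)).
  { apply (conv_close d Hd (fun n => g (y (S n)))).
    - apply (conv_shift d (fun n => g (y n))). apply (conv_cont d Hd); auto.
    - intros eps He. destruct (Hcauchy eps He) as [N HN]. exists N. intros n Hn.
      rewrite HyS. rewrite (m_sym d Hd). unfold y at 1.
      eapply Rle_lt_trans. apply Hwc. rewrite <- HyS. apply HN; lia. }
  exists z. destruct Hv as [Hf | Htcc].
  - apply (conv_uniq d Hd (fun n => f (y n))); auto.
    apply (conv_cont d Hd); auto.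
  - destruct (Htcc y z) as [phi [Hphi Hcp]]; auto.
    apply (conv_uniq d Hd (fun k => f (y (phi k)))).
    + apply (conv_subseq d (fun n => f (y n))); auto.
    + apply (conv_dom d (fun k => g (y (phi k))) _ (g z)).
      * apply (conv_subseq d (fun n => g (y n))); auto. apply (conv_cont d Hd); auto.
      * intro k. eapply Rle_trans. apply Hc. apply Hcp.
        pose proof (m_pos d Hd (g (y (phi k))) (g z)).
        assert (a * d (g (y (phi k))) (g z) <= 1 * d (g (y (phi k))) (g z))
          by (apply Rmult_le_compat_r; lra). lra.
Qed.
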